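(* Let $H_1$ and $H_2$ be two disjoint connected hypermaps and let $H_1\vee H_2$ be a join of them. Then \[ \partial_{\varepsilon_{H_1\vee H_2}}(z)=\partial_{\varepsilon_{H_1}}(z)\cdot\partial_{\varepsilon_{H_2}}(z). \]
   Context: A hypermap $H$ is a cellular embedding in a closed surface of the bipartite incidence graph of a hypergraph (vertex nodes $V(H)$, hyperedge nodes $E(H)$, $v\sim e$ iff $v\in e$); $v(H),e(H),f(H)$ count vertices, hyperedges, faces, $n_i=|e_i|$, $\chi(H)=v(H)+e(H)+f(H)-\sum_i n_i$, $c(H)$ the number of components, $\varepsilon(H)=2c(H)-\chi(H)$ the Euler genus. Combinatorially $H=(B,\tau,\psi)$ with label set $B$, cycles of $\tau$ (in pairs) encoding vertex rotations, cycles of $\psi$ encoding hyperedges, cycles of $\psi\circ\tau$ encoding faces. For $A\subseteq E(H)$ the partial dual is $H^A=(B,\psi|_A\circ\tau,\psi)$, where $\psi|_A$ equals $\psi$ on labels of hyperedges in $A$ and is the identity elsewhere. The partial-dual Euler-genus polynomial is $\partial_{\varepsilon_H}(z)=\sum_{A\subseteq E(H)}z^{\varepsilon(H^A)}$. Join: choose a vertex $v_1$ of $H_1$, a vertex $v_2$ of $H_2$ and a corner of $v_1$; $H_1\vee H_2$ identifies $v_1$ and $v_2$ into one vertex whose rotation is that of $v_1$ with the whole rotation of $v_2$ inserted at the chosen corner; all other rotations and all hyperedges are unchanged, so $E(H_1\vee H_2)=E(H_1)\cup E(H_2)$. *)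

(* Defs.v *)
(* Hypermaps in the standard flag ("tau-") model:
   three fixed-point-free involutions on a finite set of flags. *)
From mathcomp Require Import all_boot all_algebra.
Set Implicit Arguments. Unset Strict Implicit. Unset Printing Implicit Defensive.
Import GRing.Theory.

(* A flag is a triangle (vertex, hyperedge, face) of the subdivision of the
   surface; s0 changes the vertex, s1 the hyperedge, s2 the face. *)
Definition is_hypermap (T : finType) (s0 s1 s2 : T -> T) : Prop :=
  (forall x, s0 (s0 x) = x) /\ (forall x, s1 (s1 x) = x) /\
  (forall x, s2 (s2 x) = x) /\
  (forall x, s0 x != x) /\ (forall x, s1 x != x) /\ (forall x, s2 x != x).

Definition rel2 (T : finType) (f g : T -> T) : rel T :=
  fun x y => (y == f x) || (y == g x).
Definition rel3 (T : finType) (f g h : T -> T) : rel T :=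
  fun x y => [|| y == f x, y == g x | y == h x].

Definition classes (T : finType) (r : rel T) : {set {set T}} :=
  [set [set y | connect r x y] | x : T].
Definition ncls (T : finType) (r : rel T) : nat := #|classes r|.

Definition hedges (T : finType) (s0 s2 : T -> T) := classes (rel2 s0 s2).
Definition nverts (T : finType) (s1 s2 : T -> T) := ncls (rel2 s1 s2).
Definition nhedges (T : finType) (s0 s2 : T -> T) := ncls (rel2 s0 s2).
Definition nfaces (T : finType) (s0 s1 : T -> T) := ncls (rel2 s0 s1).
Definition ncomps (T : finType) (s0 s1 s2 : T -> T) := ncls (rel3 s0 s1 s2).

(* n_i = |e_i| = number of incidences of hyperedge e_i; its orbit has 2 n_i flags *)
Definition sum_deg (T : finType) (s0 s2 : T -> T) : nat :=
  \sum_(e in hedges s0 s2) (#|e| %/ 2).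

Definition euler_char (T : finType) (s0 s1 s2 : T -> T) : int :=
  ((nverts s1 s2 + nhedges s0 s2 + nfaces s0 s1)%:Z - (sum_deg s0 s2)%:Z)%R.

Definition euler_genus (T : finType) (s0 s1 s2 : T -> T) : int :=
  (2 * (ncomps s0 s1 s2)%:Z - euler_char s0 s1 s2)%R.

Definition connected_hm (T : finType) (s0 s1 s2 : T -> T) : Prop :=
  ncomps s0 s1 s2 = 1%N.

(* Partial dual w.r.t. the set S of flags of the hyperedges in A:
   on the flags of A-hyperedges the roles of s0 and s2 are exchanged
   (vertices and faces exchanged, hyperedges unchanged). *)
Definition pd0 (T : finType) (S : {set T}) (s0 s2 : T -> T) : T -> T :=
  fun x => if x \in S then s2 x else s0 x.
Definition pd2 (T : finType) (S : {set T}) (s0 s2 : T -> T) : T -> T :=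
  fun x => if x \in S then s0 x else s2 x.

Definition pdual_genus (T : finType) (s0 s1 s2 : T -> T)
    (A : {set {set T}}) : int :=
  let S := \bigcup_(e in A) e in
  euler_genus (pd0 S s0 s2) s1 (pd2 S s0 s2).

(* partial-dual Euler-genus polynomial (Euler genus is >= 0, so absz is the identity) *)
Definition pd_poly (T : finType) (s0 s1 s2 : T -> T) : {poly int} :=
  (\sum_(A in powerset (hedges s0 s2)) 'X^(absz (pdual_genus s0 s1 s2 A)))%R.

(* The flag x1 of H1 selects the vertex
   v1 and the corner {x1, s1 x1} of v1; the flag x2 of H2 selects the vertex
   v2 and where (and with which orientation) the rotation of v2 is cut open
   to be inserted into that corner. *)
Definition sum_map (T1 T2 : finType) (f : T1 -> T1) (g : T2 -> T2)
  (z : T1 + T2) : T1 + T2 :=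
  match z with inl x => inl (f x) | inr y => inr (g y) end.

Definition join1 (T1 T2 : finType) (f1 : T1 -> T1) (g1 : T2 -> T2)
  (x1 : T1) (x2 : T2) (z : T1 + T2) : T1 + T2 :=
  if z == inl x1 then inr x2
  else if z == inr x2 then inl x1
  else if z == inl (f1 x1) then inr (g1 x2)
  else if z == inr (g1 x2) then inl (f1 x1)
  else sum_map f1 g1 z.

(* Main.v *)
Require Import Defs.
From mathcomp Require Import all_boot all_algebra.
From mathcomp Require Import zify.
Set Implicit Arguments. Unset Strict Implicit. Unset Printing Implicit Defensive.


Section Basic.
Variable T : finType.
Implicit Types (r : rel T).

Lemma closed_connect_set r (A : {set T}) x y :
  (forall a b, a \in A -> r a b -> b \in A) -> x \in A -> connect r x y -> y \in A.
Proof.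
move=> h xA /connectP [p pth ->]; elim: p x xA pth => //= z p IH x xA /andP[rxz pth].
exact: IH (h _ _ xA rxz) pth.
Qed.

Lemma eq_classes r r' : connect r =2 connect r' -> classes r = classes r'.
Proof.
move=> h; apply/setP=> X; apply/imsetP/imsetP => -[x _ ->]; exists x => //;
  apply/setP=> y; by rewrite !inE h.
Qed.

Lemma eq_ncls r r' : connect r =2 connect r' -> ncls r = ncls r'.
Proof. by move=> h; rewrite /ncls (eq_classes h). Qed.

Lemma even_closed (s : T -> T) (A : {set T}) :
  (forall x, s (s x) = x) -> (forall x, s x != x) ->
  (forall x, x \in A -> s x \in A) -> ~~ odd #|A|.
Proof.
move=> sK sF; move: {2}#|A| (leqnn #|A|) => n; elim: n A => [|n IH] A.
  by rewrite leqn0 => /eqP ->.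
move=> le hA; case: (set_0Vmem A) => [->|[x xA]]; first by rewrite cards0.
set A' := A :\ x :\ s x.
have hA' : forall y, y \in A' -> s y \in A'.
  move=> y; rewrite !inE => /and3P[ysx yx yA].
  rewrite hA // andbT; apply/andP; split.
    apply: contra yx => /eqP/(congr1 s); rewrite !sK => ->; exact: eqxx.
  apply: contra ysx => /eqP <-; by rewrite sK.
have cA : #|A| = #|A'|.+2.
  rewrite (cardsD1 x A) xA (cardsD1 (s x) (A :\ x)) !inE sF hA //.
rewrite cA /= negbK; apply: IH => //. rewrite cA in le; exact: leq_trans (leqnSn _) (ltnSE le).
Qed.

Definition cl r x := [set y | connect r x y].
Lemma classesE r : classes r = [set cl r x | x : T].
Proof. by []. Qed.

Definition addE r u v : rel T :=
  fun x y => r x y || ((x == u) && (y == v)) || ((x == v) && (y == u)).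

Section Sym.
Variable r : rel T.
Hypothesis sym : symmetric r.
Let csym := sym_connect_sym sym.

Lemma cl_eq a b : connect r a b -> cl r a = cl r b.
Proof.
move=> ab; apply/setP=> y; rewrite !inE; apply/idP/idP => h.
  by apply: connect_trans h; rewrite csym.
exact: connect_trans ab h.
Qed.

Lemma conn_eq a b y : connect r a b -> connect r a y = connect r b y.
Proof. by move/cl_eq/setP/(_ y); rewrite !inE. Qed.

Lemma connect_addE u v x y : connect (addE r u v) x y =
  connect r x y || (connect r x u && connect r v y) || (connect r x v && connect r u y).
Proof.
have sub : forall a b, connect r a b -> connect (addE r u v) a b.
  apply: connect_sub => a b rab; apply: connect1; by rewrite /addE rab.
apply/idP/idP.
  move=> cxy.
  have : y \in [set z | connect r x z || (connect r x u && connect r v z) ||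
                        (connect r x v && connect r u z)].
    apply: (closed_connect_set _ _ cxy); last by rewrite inE connect0.
    move=> a b; rewrite !inE => Pa /orP[/orP[rab|/andP[/eqP ea /eqP eb]]|/andP[/eqP ea /eqP eb]].
    - move: Pa => /orP[/orP[h|/andP[h1 h2]]|/andP[h1 h2]].
      + by rewrite (connect_trans h (connect1 rab)).
      + by rewrite h1 (connect_trans h2 (connect1 rab)) orbT.
      + by rewrite h1 (connect_trans h2 (connect1 rab)) !orbT.
    - subst a b; move: Pa => /orP[/orP[h|/andP[h1 h2]]|/andP[h1 h2]].
      + by rewrite h connect0 orbT.
      + by rewrite h1 connect0 orbT.
      + by rewrite h1.
    - subst a b; move: Pa => /orP[/orP[h|/andP[h1 h2]]|/andP[h1 h2]].
      + by rewrite h connect0 !orbT.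
      + by rewrite h1.
      + by rewrite h1 connect0 !orbT.
  by rewrite inE.
move=> /orP[/orP[h|/andP[h1 h2]]|/andP[h1 h2]].
- exact: sub.
- apply: connect_trans (sub _ _ h1) _; apply: connect_trans (sub _ _ h2).
  by apply: connect1; rewrite /addE !eqxx orbT.
- apply: connect_trans (sub _ _ h1) _; apply: connect_trans (sub _ _ h2).
  by apply: connect1; rewrite /addE !eqxx !orbT.
Qed.

Lemma ncls_addE u v : ncls (addE r u v) + ~~ connect r u v = ncls r.
Proof.
case cuv: (connect r u v) => /=.
  rewrite addn0; apply: eq_ncls => x y; rewrite connect_addE.
  apply/idP/idP => [/orP[/orP[//|/andP[h1 h2]]|/andP[h1 h2]]|->//].
    by apply: connect_trans h1 (connect_trans cuv h2).
  by apply: connect_trans h1 (connect_trans _ h2); rewrite csym.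
set U := cl r u :|: cl r v.
have clA : forall x, cl (addE r u v) x = if x \in U then U else cl r x.
  move=> x; apply/setP=> y; rewrite /cl !inE connect_addE.
  case: ifP; rewrite !inE => hx.
    case/orP: hx => hx.
      have xu : connect r x u by rewrite csym.
      have xv : connect r x v = false.
        by apply/negbTE; apply: contraFN cuv => xv; apply: connect_trans hx xv.
      by rewrite xu xv /= orbF (conn_eq _ xu).
    have xv : connect r x v by rewrite csym.
    have xu : connect r x u = false.
      apply/negbTE; apply: contraFN cuv => xu.
      by apply: connect_trans _ xv; rewrite csym.
    by rewrite xu xv /= orbF (conn_eq _ xv) orbC.
  move/norP: hx => [hu hv].
  have hu' : connect r x u = false by apply/negbTE; rewrite csym.
  have hv' : connect r x v = false by apply/negbTE; rewrite csym.
  by rewrite hu' hv' /= !orbF.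
set B := [set cl r x | x in ~: U].
have uU : u \in U by rewrite !inE connect0.
have vU : v \in U by rewrite !inE connect0 orbT.
have nB : forall x, x \in U -> cl r x \notin B.
  move=> x xU; apply/imsetP => -[y yU e].
  have : x \in cl r y by rewrite -e inE connect0.
  rewrite inE => yx; move: yU; rewrite inE; case/negP.
  have xy : connect r x y by rewrite csym.
  move: xU; rewrite !inE => /orP[h|h].
    by rewrite (connect_trans h xy).
  by rewrite (connect_trans h xy) orbT.
have UB : U \notin B.
  apply/imsetP => -[y yU e].
  have : u \in cl r y by rewrite -e.
  rewrite inE => yu; move: yU; rewrite !inE; case/negP.
  by rewrite csym yu.
have e1 : classes r = cl r u |: (cl r v |: B).
  apply/setP => X; rewrite classesE !inE; apply/imsetP/idP.
    move=> [x _ ->]; case xU: (x \in U).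
      move: xU; rewrite !inE => /orP[h|h].
        by rewrite (@cl_eq u x h) eqxx.
      by rewrite (@cl_eq v x h) eqxx orbT.
    by rewrite imset_f ?orbT // inE xU.
  case/orP=> [/eqP ->|/orP[/eqP ->|/imsetP[x _ ->]]]; by eexists.
have e2 : classes (addE r u v) = U |: B.
  apply/setP => X; rewrite classesE !inE; apply/imsetP/idP.
    move=> [x _ ->]; rewrite clA; case xU: (x \in U); first by rewrite eqxx.
    by rewrite imset_f ?orbT // inE xU.
  case/orP=> [/eqP ->|/imsetP[x xU ->]].
    by exists u => //; rewrite clA uU.
  by exists x => //; rewrite clA; move: xU; rewrite inE => /negbTE ->.
have neq : cl r u \notin cl r v |: B.
  rewrite !inE negb_or nB // andbT; apply/eqP => e.
  have : v \in cl r u by rewrite e inE connect0.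
  by rewrite inE cuv.
rewrite /ncls e1 e2 !cardsU1 neq UB (nB _ vU) /=.
by rewrite add1n addn1.
Qed.
End Sym.

End Basic.


Definition eqv6 (c1 c2 c3 c4 c5 c6 : bool) : bool :=
  [&& (c1 && c4 ==> c2), (c1 && c2 ==> c4), (c2 && c4 ==> c1),
      (c1 && c5 ==> c3), (c1 && c3 ==> c5), (c3 && c5 ==> c1),
      (c2 && c6 ==> c3), (c2 && c3 ==> c6), (c3 && c6 ==> c2),
      (c4 && c6 ==> c5), (c4 && c5 ==> c6), (c5 && c6 ==> c4),
      c1 (+) c2 (+) c3, c1 (+) c4 (+) c5, c2 (+) c4 (+) c6 & c3 (+) c5 (+) c6].

Lemma key_bool c1 c2 c3 c4 c5 c6 d1 d2 d3 d4 d5 d6 :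
  [&& eqv6 c1 c2 c3 c4 c5 c6, eqv6 d1 d2 d3 d4 d5 d6, d2,
      c1 ==> d1, c2 ==> d2, c3 ==> d3, c4 ==> d4, c5 ==> d5 & c6 ==> d6] ==>
  (~~ c2 + ~~ (c5 || (c1 && c6) || (c4 && c3)) +
     2 * (~~ d1 + ~~ (d6 || (d2 && d5) || (d4 && d3))) <=
   ~~ c1 + ~~ (c6 || (c2 && c5) || (c4 && c3)) +
     2 * (~~ d2 + ~~ (d5 || (d1 && d6) || (d4 && d3))) + 1).
Proof.
by case: c1; case: c2; case: c3; case: c4; case: c5; case: c6;
   case: d1; case: d2; case: d3; case: d4; case: d5; case: d6.
Qed.


Definition sw (T : finType) (q : T -> T) (u w : T) : T -> T := fun z =>
  if z == u then w else if z == w then u else if z == q u then q w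
  else if z == q w then q u else q z.

Section Move.
Variables (T : finType) (R : rel T) (q : T -> T) (u w : T).
Hypothesis symR : symmetric R.
Hypothesis qK : forall x, q (q x) = x.
Hypothesis qF : forall x, q x != x.
Hypothesis wu : w != u.
Hypothesis wqu : w != q u.

Definition S4 := [:: u; q u; w; q w].
Definition Kr : rel T := fun x y => R x y || ((x \notin S4) && (y == q x)).

Lemma qeq x y : (q x == y) = (x == q y).
Proof. by rewrite -{1}(qK y) (can_eq qK). Qed.

Lemma mem_S4 x : (q x \in S4) = (x \in S4).
Proof.
rewrite !inE !qeq !qK; by case: (x == q u); case: (x == u); case: (x == q w); case: (x == w).
Qed.

Lemma symK : symmetric Kr.
Proof.
move=> x y; rewrite /Kr symR; congr (_ || _).
apply/andP/andP => -[h /eqP ->]; by rewrite ?mem_S4 ?qK.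
Qed.

Let d1 : (u == q u) = false. Proof. by apply/negbTE; rewrite eq_sym. Qed.
Let d2 : (u == w) = false. Proof. by apply/negbTE; rewrite eq_sym. Qed.
Let d3 : (u == q w) = false. Proof. by apply/negbTE; rewrite -qeq eq_sym. Qed.
Let d4 : (q u == w) = false. Proof. by apply/negbTE; rewrite eq_sym. Qed.
Let d5 : (q u == q w) = false. Proof. by apply/negbTE; rewrite (can_eq qK) eq_sym. Qed.
Let d6 : (w == q w) = false. Proof. by apply/negbTE; rewrite eq_sym. Qed.
Let d1' : (q u == u) = false. Proof. by rewrite eq_sym. Qed.
Let d2' : (w == u) = false. Proof. by rewrite eq_sym. Qed.
Let d3' : (q w == u) = false. Proof. by rewrite eq_sym. Qed.
Let d4' : (w == q u) = false. Proof. by rewrite eq_sym. Qed.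
Let d5' : (q w == q u) = false. Proof. by rewrite eq_sym. Qed.
Let d6' : (q w == w) = false. Proof. by rewrite eq_sym. Qed.

Ltac dsimp := rewrite ?eqxx ?qK ?d1 ?d2 ?d3 ?d4 ?d5 ?d6 ?d1' ?d2' ?d3' ?d4' ?d5' ?d6' /=
  ?orbF ?andbF ?andbT ?orbT ?orFb.

Lemma old_eq : (fun x y => R x y || (y == q x)) =2 addE (addE Kr u (q u)) w (q w).
Proof.
move=> x y; rewrite /addE /Kr !inE.
case: (eqVneq x u) => [->|xu]; dsimp.
  by [].
case: (eqVneq x (q u)) => [->|xqu]; dsimp.
  by [].
case: (eqVneq x w) => [->|xw]; dsimp.
  by [].
case: (eqVneq x (q w)) => [->|xqw]; dsimp.
  by [].
by [].
Qed.

Lemma new_eq : (fun x y => R x y || (y == sw q u w x)) =2 addE (addE Kr u w) (q u) (q w).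
Proof.
move=> x y; rewrite /addE /Kr /sw !inE.
case: (eqVneq x u) => [->|xu]; dsimp.
  by [].
case: (eqVneq x (q u)) => [->|xqu]; dsimp.
  by [].
case: (eqVneq x w) => [->|xw]; dsimp.
  by [].
case: (eqVneq x (q w)) => [->|xqw]; dsimp.
  by [].
by [].
Qed.


Lemma swK x : sw q u w (sw q u w x) = x.
Proof.
rewrite /sw; case: (eqVneq x u) => [->|xu]; dsimp => //.
case: (eqVneq x w) => [->|xw]; dsimp => //.
case: (eqVneq x (q u)) => [->|xqu]; dsimp => //.
case: (eqVneq x (q w)) => [->|xqw]; dsimp => //.
by rewrite !qeq !qK (negbTE xu) (negbTE xw) (negbTE xqu) (negbTE xqw).
Qed.

Lemma swF x : sw q u w x != x.
Proof.
rewrite /sw; case: (eqVneq x u) => [->|xu]; dsimp => //.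
case: (eqVneq x w) => [->|xw]; dsimp => //.
case: (eqVneq x (q u)) => [->|xqu]; dsimp => //.
case: (eqVneq x (q w)) => [->|xqw]; dsimp => //.
Qed.

Lemma sym_addE (r : rel T) a b : symmetric r -> symmetric (addE r a b).
Proof.
move=> sr x y; rewrite /addE sr.
by case: (r y x); case: (x == a); case: (y == b); case: (x == b); case: (y == a).
Qed.

Lemma cnt_old : ncls (fun x y => R x y || (y == q x)) + ~~ connect Kr u (q u)
  + ~~ connect (addE Kr u (q u)) w (q w) = ncls Kr.
Proof.
rewrite (eq_ncls (eq_connect old_eq)) addnAC.
rewrite (ncls_addE (sym_addE _ _ symK)).
by rewrite (ncls_addE symK).
Qed.

Lemma cnt_new : ncls (fun x y => R x y || (y == sw q u w x)) + ~~ connect Kr u w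
  + ~~ connect (addE Kr u w) (q u) (q w) = ncls Kr.
Proof.
rewrite (eq_ncls (eq_connect new_eq)) addnAC.
rewrite (ncls_addE (sym_addE _ _ symK)).
by rewrite (ncls_addE symK).
Qed.

Lemma uniqS4 : uniq S4.
Proof. by rewrite /S4 /= !inE; dsimp. Qed.

Lemma card_count (W : {set T}) (s : seq T) : uniq s ->
  #|W :&: [set x | x \in s]| = count (mem W) s.
Proof.
move=> us; rewrite -size_filter.
rewrite -(card_uniqP (filter_uniq (mem W) us)); apply: eq_card => x.
by rewrite !inE mem_filter.
Qed.

Lemma parity (p : T -> T) : (forall x, p (p x) = x) -> (forall x, p x != x) ->
  (forall x, R x (p x)) -> forall a,
  ~~ odd (connect Kr a u + connect Kr a (q u) + connect Kr a w + connect Kr a (q w)).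
Proof.
move=> pK pF Rp a.
set W := [set y | connect Kr a y].
have eW : ~~ odd #|W|.
  apply: (even_closed pK pF) => x; rewrite !inE => ax.
  by apply: connect_trans ax (connect1 _); rewrite /Kr Rp.
have eWS : ~~ odd #|W :\: [set x | x \in S4]|.
  apply: (even_closed qK qF) => x; rewrite in_setD !in_set => /andP[xS ax].
  rewrite mem_S4 xS /=; apply: connect_trans ax (connect1 _).
  by rewrite /Kr xS eqxx orbT.
move: eW; rewrite -(cardsID [set x | x \in S4] W) oddD (negbTE eWS) addbF.
rewrite card_count ?uniqS4 //= !inE addn0 !addnA. by [].
Qed.
End Move.


Lemma eqv6_of (T : finType) (r : rel T) (sym : connect_sym r) a b c d :
  ~~ odd (connect r a a + connect r a b + connect r a c + connect r a d) ->
  ~~ odd (connect r b a + connect r b b + connect r b c + connect r b d) ->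
  ~~ odd (connect r c a + connect r c b + connect r c c + connect r c d) ->
  ~~ odd (connect r d a + connect r d b + connect r d c + connect r d d) ->
  eqv6 (connect r a b) (connect r a c) (connect r a d) (connect r b c)
       (connect r b d) (connect r c d).
Proof.
move=> Pa Pb Pc Pd.
have tri x y z : [&& connect r x y && connect r y z ==> connect r x z,
                    connect r x y && connect r x z ==> connect r y z &
                    connect r x z && connect r y z ==> connect r x y].
  apply/and3P; split; apply/implyP => /andP[h1 h2].
  - exact: connect_trans h1 h2.
  - by apply: connect_trans _ h2; rewrite sym.
  - by apply: connect_trans h1 _; rewrite sym.
move: (tri a b c) (tri a b d) (tri a c d) (tri b c d) Pa Pb Pc Pd.
rewrite !connect0 (sym b a) (sym c a) (sym c b) (sym d a) (sym d b) (sym d c) /eqv6.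
move: (connect r a b) (connect r a c) (connect r a d) (connect r b c)
  (connect r b d) (connect r c d) => ab ac ad bc bd cd.
by case: ab; case: ac; case: ad; case: bc; case: bd; case: cd.
Qed.


Section Counting.
Variable T : finType.

Lemma inv_eq (s : T -> T) : (forall x, s (s x) = x) -> forall x y, (y == s x) = (x == s y).
Proof. by move=> sK x y; rewrite -{1}(sK y) (can_eq sK) eq_sym. Qed.

Lemma sum_classes (r : rel T) : connect_sym r -> \sum_(E in classes r) #|E| = #|T|.
Proof.
move=> sym.
have -> : classes r = equivalence_partition (connect r) [set: T].
  apply/setP => X; apply/imsetP/imsetP => -[x _ ->]; exists x => //;
  apply/setP => y; by rewrite !inE.
rewrite -(card_partition (equivalence_partitionP _)) ?cardsT //.
move=> x y z _ _ _; split; first exact: connect0.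
move=> xy; apply/idP/idP => [xz|yz]; last exact: connect_trans xy yz.
by apply: connect_trans _ xz; rewrite sym.
Qed.

Lemma class_closed (r : rel T) E x y : E \in classes r -> x \in E -> r x y -> y \in E.
Proof.
case/imsetP => z _ ->; rewrite !inE => zx rxy.
exact: connect_trans zx (connect1 rxy).
Qed.

Lemma ncls_inv (s : T -> T) : (forall x, s (s x) = x) -> (forall x, s x != x) ->
  ncls (rel2 s s) * 2 = #|T|.
Proof.
move=> sK sF.
have sym : connect_sym (rel2 s s).
  apply: sym_connect_sym => x y; rewrite /rel2 !orbb; exact: inv_eq.
rewrite -(sum_classes sym) /ncls -sum_nat_const; apply: eq_bigr => E.
case/imsetP => x _ ->.
have -> : [set y | connect (rel2 s s) x y] = [set x; s x].
  apply/setP => y; rewrite !inE; apply/idP/idP.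
    move=> xy; have : y \in [set x; s x].
      apply: (closed_connect_set _ _ xy); last by rewrite !inE eqxx.
      move=> a b; rewrite !inE /rel2 orbb => /orP[] /eqP -> /eqP ->.
        by rewrite eqxx orbT.
      by rewrite sK eqxx.
    by rewrite !inE.
  case/orP => /eqP ->; first exact: connect0.
  by apply: connect1; rewrite /rel2 eqxx.
by rewrite cards2 eq_sym sF.
Qed.

Lemma sum_deg_half (s0 s2 : T -> T) : (forall x, s0 (s0 x) = x) -> (forall x, s0 x != x) ->
  (forall x, s2 (s2 x) = x) -> sum_deg s0 s2 * 2 = #|T|.
Proof.
move=> s0K s0F s2K.
have sym : connect_sym (rel2 s0 s2).
  apply: sym_connect_sym => x y; rewrite /rel2 (inv_eq s0K) (inv_eq s2K) //.
rewrite -(sum_classes sym) /sum_deg big_distrl /=; apply: eq_bigr => E EH.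
rewrite divnK // dvdn2; apply: (even_closed s0K s0F) => x xE.
by apply: class_closed EH xE _; rewrite /rel2 eqxx.
Qed.

End Counting.


Lemma Kr_mono (T : finType) (R R' : rel T) q u w :
  (forall x y, R x y -> R' x y) ->
  forall x y, connect (Kr R q u w) x y -> connect (Kr R' q u w) x y.
Proof.
move=> h; apply: connect_sub => x y /orP[/h rxy|k]; apply: connect1.
  by rewrite /Kr rxy.
by rewrite /Kr k orbT.
Qed.

Section Euler.
Variables (T : finType) (s0 s2 : T -> T).
Hypotheses (s0K : forall x, s0 (s0 x) = x) (s0F : forall x, s0 x != x).
Hypotheses (s2K : forall x, s2 (s2 x) = x) (s2F : forall x, s2 x != x).

Definition Rv : rel T := fun x y => y == s2 x.
Definition Rf : rel T := fun x y => y == s0 x.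
Definition Rc : rel T := fun x y => (y == s0 x) || (y == s2 x).

Lemma symRv : symmetric Rv. Proof. move=> x y; exact: inv_eq. Qed.
Lemma symRf : symmetric Rf. Proof. move=> x y; exact: inv_eq. Qed.
Lemma symRc : symmetric Rc.
Proof. by move=> x y; rewrite /Rc (inv_eq s0K) (inv_eq s2K). Qed.

Lemma nv_eq s1 : nverts s1 s2 = ncls (fun x y => Rv x y || (y == s1 x)).
Proof. by apply: eq_ncls; apply: eq_connect => x y; rewrite /rel2 /Rv orbC. Qed.
Lemma nf_eq s1 : nfaces s0 s1 = ncls (fun x y => Rf x y || (y == s1 x)).
Proof. by []. Qed.
Lemma nc_eq s1 : ncomps s0 s1 s2 = ncls (fun x y => Rc x y || (y == s1 x)).
Proof.
apply: eq_ncls; apply: eq_connect => x y; rewrite /rel3 /Rc.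
by case: (y == s0 x); case: (y == s1 x); case: (y == s2 x).
Qed.

Lemma euler_step s1 a :
  (forall x, s1 (s1 x) = x) -> (forall x, s1 x != x) -> s1 a != s2 a ->
  let s1' := sw s1 a (s2 a) in
  nverts s1' s2 + nhedges s0 s2 + nfaces s0 s1' <= 2 * ncomps s0 s1' s2 + sum_deg s0 s2 ->
  nverts s1 s2 + nhedges s0 s2 + nfaces s0 s1 <= 2 * ncomps s0 s1 s2 + sum_deg s0 s2.
Proof.
move=> s1K s1F ha s1' IH.
have wu : s2 a != a by apply: s2F.
have wqu : s2 a != s1 a by rewrite eq_sym.
rewrite /s1' !nv_eq !nf_eq !nc_eq in IH *.
have symv := symK a (s2 a) symRv s1K; have symf := symK a (s2 a) symRf s1K.
have symc := symK a (s2 a) symRc s1K.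
have csv := sym_connect_sym symv; have csf := sym_connect_sym symf.
have csc := sym_connect_sym symc.
have vo := cnt_old symRv s1K s1F wu wqu; have vn := cnt_new symRv s1K s1F wu wqu.
have fo := cnt_old symRf s1K s1F wu wqu; have fn := cnt_new symRf s1K s1F wu wqu.
have co := cnt_old symRc s1K s1F wu wqu; have cn := cnt_new symRc s1K s1F wu wqu.
rewrite !connect_addE in vo vn fo fn co cn.
have euw : connect (Kr Rv s1 a (s2 a)) a (s2 a).
  by apply: connect1; rewrite /Kr /Rv eqxx.
have clo : forall y, connect (Kr Rv s1 a (s2 a)) a y -> y \in [set a; s2 a].
  move=> y ay; apply: (closed_connect_set _ _ ay); last by rewrite !inE eqxx.
  move=> x z; rewrite !inE => xA; have xS : x \in S4 s1 a (s2 a).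
    by case/orP: xA => /eqP ->; rewrite /S4 !inE eqxx ?orbT.
  rewrite /Kr xS /= orbF => /eqP ->.
  by case/orP: xA => /eqP ->; rewrite ?s2K eqxx ?orbT.
have e1 : connect (Kr Rv s1 a (s2 a)) a (s1 a) = false.
  by apply/negbTE/negP => /clo; rewrite !inE (negbTE (s1F a)) eq_sym (negbTE wqu).
have e2 : connect (Kr Rv s1 a (s2 a)) (s1 a) (s2 a) = false.
  by rewrite csv -(conn_eq symv _ euw) e1.
have e3 : connect (Kr Rv s1 a (s2 a)) (s1 a) (s1 (s2 a)).
  have := @parity _ Rv _ _ _ s1K s1F wu wqu _ s2K s2F (fun x => eqxx (s2 x)) (s1 a).
  rewrite connect0 (csv (s1 a) a) e1 e2.
  by case: (connect _ (s1 a) (s1 (s2 a))).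
rewrite (csv (s2 a) a) euw e3 e1 /= ?orbT /= in vo vn.
set Kf := Kr Rf s1 a (s2 a) in fo fn csf *; set Kc := Kr Rc s1 a (s2 a) in co cn csc *.
have parf := @parity _ Rf _ _ _ s1K s1F wu wqu _ s0K s0F (fun x => eqxx (s0 x)).
have parc := @parity _ Rc _ _ _ s1K s1F wu wqu _ s0K s0F
  (fun x => introT orP (or_introl (eqxx (s0 x)))).
have E6f := eqv6_of csf (parf a) (parf (s1 a)) (parf (s2 a)) (parf (s1 (s2 a))).
have E6c := eqv6_of csc (parc a) (parc (s1 a)) (parc (s2 a)) (parc (s1 (s2 a))).
have mono := @Kr_mono _ Rf Rc s1 a (s2 a) (fun x y h => introT orP (or_introl h)).
have ccuw : connect Kc a (s2 a) by apply: connect1; rewrite /Kc /Kr /Rc eqxx orbT.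
have KB := key_bool (connect Kf a (s1 a)) (connect Kf a (s2 a)) (connect Kf a (s1 (s2 a)))
  (connect Kf (s1 a) (s2 a)) (connect Kf (s1 a) (s1 (s2 a))) (connect Kf (s2 a) (s1 (s2 a)))
  (connect Kc a (s1 a)) (connect Kc a (s2 a)) (connect Kc a (s1 (s2 a)))
  (connect Kc (s1 a) (s2 a)) (connect Kc (s1 a) (s1 (s2 a))) (connect Kc (s2 a) (s1 (s2 a))).
have imp x y : connect Kf x y ==> connect Kc x y := introT implyP (mono x y).
rewrite E6f E6c !imp ccuw /= in KB.
rewrite (csf (s2 a) a) (csf (s2 a) (s1 a)) in fo.
rewrite (csf (s1 a) a) in fn.
rewrite (csc (s2 a) a) (csc (s2 a) (s1 a)) ccuw /= in co.
rewrite (csc (s1 a) a) ccuw /= in cn.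
move: KB fo fn co cn vo vn IH.
set x1 := nat_of_bool _; set x2 := nat_of_bool _; set x3 := nat_of_bool _.
set x4 := nat_of_bool _; set x5 := nat_of_bool _; set x6 := nat_of_bool _.
set x7 := nat_of_bool _.
clearbody x1 x2 x3 x4 x5 x6 x7.
move: (ncls _) (ncls _) => n1 n2.
lia.
Qed.

Lemma euler_ineq s1 : (forall x, s1 (s1 x) = x) -> (forall x, s1 x != x) ->
  nverts s1 s2 + nhedges s0 s2 + nfaces s0 s1 <= 2 * ncomps s0 s1 s2 + sum_deg s0 s2.
Proof.
move=> s1K s1F; move: {2}#|[set x | s1 x != s2 x]| (leqnn #|[set x | s1 x != s2 x]|) => n.
elim: n s1 s1K s1F => [|n IH] s1 s1K s1F le.
  have E : forall x, s1 x = s2 x.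
    move=> x; apply/eqP/negPn/negP => h.
    by move: le; rewrite leqn0 => /eqP/cards0_eq/setP/(_ x); rewrite !inE h.
  have e1 : nverts s1 s2 = ncls (rel2 s2 s2).
    by apply: eq_ncls; apply: eq_connect => x y; rewrite /rel2 E.
  have e2 : nfaces s0 s1 = nhedges s0 s2.
    by apply: eq_ncls; apply: eq_connect => x y; rewrite /rel2 E.
  have e3 : ncomps s0 s1 s2 = nhedges s0 s2.
    apply: eq_ncls; apply: eq_connect => x y; rewrite /rel2 /rel3 E.
    by case: (y == s0 x); case: (y == s2 x).
  have h1 := ncls_inv s2K s2F; have h2 := sum_deg_half s0K s0F s2K.
  rewrite e1 e2 e3; lia.
case: (leqP #|[set x | s1 x != s2 x]| n) => [le'|lt]; first exact: IH.
have : #|[set x | s1 x != s2 x]| != 0 by rewrite -lt0n (leq_ltn_trans _ lt).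
rewrite cards_eq0 => /set0Pn [a]; rewrite inE => ha.
have wu : s2 a != a by apply: s2F.
have wqu : s2 a != s1 a by rewrite eq_sym.
apply: (euler_step s1K s1F ha); apply: IH.
- exact: swK.
- exact: swF.
have sub : [set x | sw s1 a (s2 a) x != s2 x] \subset [set x | s1 x != s2 x] :\ a.
  apply/subsetP => x; rewrite !inE /sw.
  case: (eqVneq x a) => [->|xa]; first by rewrite eqxx.
  case: (eqVneq x (s2 a)) => [->|xw]; first by rewrite s2K eqxx.
  case: (eqVneq x (s1 a)) => [->|xqu].
    by move=> _; rewrite s1K (inv_eq s2K) ha.
  case: (eqVneq x (s1 (s2 a))) => [->|xqw].
    by move=> _; rewrite s1K (inv_eq s2K) s2K eq_sym (inv_eq s1K) wqu.
  by move=> ->.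
apply: leq_trans (subset_leq_card sub) _.
move: le; rewrite (cardsD1 a) inE ha /= add1n ltnS => h.
exact: h.
Qed.
End Euler.


Section Sum.
Variables (T1 T2 : finType) (r1 : rel T1) (r2 : rel T2).

Definition sumrel : rel (T1 + T2) := fun x y =>
  match x, y with
  | inl a, inl b => r1 a b
  | inr a, inr b => r2 a b
  | _, _ => false
  end.

Lemma inl_inj : injective (@inl T1 T2). Proof. by move=> a b []. Qed.
Lemma inr_inj : injective (@inr T1 T2). Proof. by move=> a b []. Qed.

Lemma connect_suml a y : connect sumrel (inl a) y =
  match y with inl b => connect r1 a b | inr _ => false end.
Proof.
apply/idP/idP.
  move=> ay.
  have : y \in [set z | match z with inl b => connect r1 a b | inr _ => false end].
    apply: (closed_connect_set _ _ ay); last by rewrite inE connect0.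
    move=> [b|b] [c|c]; rewrite !inE //= => h1 h2.
    exact: connect_trans h1 (connect1 h2).
  by rewrite inE.
case: y => // b /connectP [p pth ->]; apply/connectP; exists (map inl p).
  by elim: p a pth => //= c p IH a /andP[h1 h2]; rewrite h1 IH.
by rewrite last_map.
Qed.

Lemma connect_sumr a y : connect sumrel (inr a) y =
  match y with inr b => connect r2 a b | inl _ => false end.
Proof.
apply/idP/idP.
  move=> ay.
  have : y \in [set z | match z with inr b => connect r2 a b | inl _ => false end].
    apply: (closed_connect_set _ _ ay); last by rewrite inE connect0.
    move=> [b|b] [c|c]; rewrite !inE //= => h1 h2.
    exact: connect_trans h1 (connect1 h2).
  by rewrite inE.
case: y => // b /connectP [p pth ->]; apply/connectP; exists (map inr p).
  by elim: p a pth => //= c p IH a /andP[h1 h2]; rewrite h1 IH.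
by rewrite last_map.
Qed.

Definition liftl (E : {set T1}) : {set T1 + T2} := inl @: E.
Definition liftr (E : {set T2}) : {set T1 + T2} := inr @: E.

Lemma classes_sum : classes sumrel = liftl @: classes r1 :|: liftr @: classes r2.
Proof.
apply/setP => X; rewrite classesE inE; apply/imsetP/orP.
  move=> [[a|a] _ ->]; [left|right]; apply/imsetP; exists (cl r1 a) || exists (cl r2 a);
    rewrite ?imset_f //; apply/setP => y; rewrite !inE.
    rewrite connect_suml; case: y => [b|b].
      by rewrite (mem_imset _ _ inl_inj) inE.
    by apply/esym/imsetP => -[].
  rewrite connect_sumr; case: y => [b|b].
    by apply/esym/imsetP => -[].
  by rewrite (mem_imset _ _ inr_inj) inE.
case=> /imsetP [E /imsetP [a _ ->] ->]; [exists (inl a) | exists (inr a)] => //;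
  apply/setP => y; rewrite !inE ?connect_suml ?connect_sumr; case: y => [b|b].
- by rewrite (mem_imset _ _ inl_inj) inE.
- by apply/imsetP => -[].
- by apply/imsetP => -[].
- by rewrite (mem_imset _ _ inr_inj) inE.
Qed.

Lemma class_nonempty (T : finType) (r : rel T) E : E \in classes r -> E != set0.
Proof.
case/imsetP => a _ ->; apply/set0Pn; exists a; by rewrite inE connect0.
Qed.

Lemma ncls_sum : ncls sumrel = ncls r1 + ncls r2.
Proof.
rewrite /ncls classes_sum cardsU.
have il : injective liftl := imset_inj (@inl_inj).
have ir : injective liftr := imset_inj (@inr_inj).
rewrite (card_imset _ il) (card_imset _ ir).
have -> : liftl @: classes r1 :&: liftr @: classes r2 = set0.
  apply/setP => X; rewrite !inE; apply/negP => /andP[/imsetP[E EH ->] /imsetP[F FH]].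
  move/setP => e; case/set0Pn: (class_nonempty EH) => a aE.
  by move: (e (inl a)); rewrite (mem_imset _ _ inl_inj) aE => /esym/imsetP[].
by rewrite cards0 subn0.
Qed.

End Sum.


Section JoinCount.
Variables (T1 T2 : finType) (R1 : rel T1) (R2 : rel T2).
Variables (q1 p1 : T1 -> T1) (q2 p2 : T2 -> T2) (x1 : T1) (x2 : T2).
Hypotheses (sym1 : symmetric R1) (sym2 : symmetric R2).
Hypotheses (q1K : forall x, q1 (q1 x) = x) (q1F : forall x, q1 x != x).
Hypotheses (q2K : forall x, q2 (q2 x) = x) (q2F : forall x, q2 x != x).
Hypotheses (p1K : forall x, p1 (p1 x) = x) (p1F : forall x, p1 x != x).
Hypotheses (p2K : forall x, p2 (p2 x) = x) (p2F : forall x, p2 x != x).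
Hypotheses (R1p : forall x, R1 x (p1 x)) (R2p : forall x, R2 x (p2 x)).

Local Notation R := (sumrel R1 R2).
Local Notation q := (sum_map q1 q2).
Local Notation u := (@inl T1 T2 x1).
Local Notation w := (@inr T1 T2 x2).
Local Notation Rq1 := (fun a b => R1 a b || (b == q1 a)).
Local Notation Rq2 := (fun a b => R2 a b || (b == q2 a)).

Lemma join_count :
  ncls (fun x y => R x y || (y == sw q u w x)) + 1 = ncls Rq1 + ncls Rq2.
Proof.
have symR : symmetric R by move=> [a|a] [b|b] //=; rewrite ?sym1 ?sym2.
have qK : forall x, q (q x) = x by move=> [a|a]; rewrite /= ?q1K ?q2K.
have qF : forall x, q x != x.
  move=> [a|a] /=; rewrite ?(inj_eq (@inl_inj _ _)) ?(inj_eq (@inr_inj _ _)); by [].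
have wu : w != u by [].
have wqu : w != q u by [].
have old_eqv : connect (fun x y => R x y || (y == q x)) =2 connect (sumrel Rq1 Rq2).
  apply: eq_connect => [[a|a] [b|b]] /=;
    by rewrite ?(inj_eq (@inl_inj _ _)) ?(inj_eq (@inr_inj _ _)).
have co := cnt_old symR qK qF wu wqu; have cn := cnt_new symR qK qF wu wqu.
rewrite (eq_ncls old_eqv) ncls_sum in co.
rewrite !connect_addE /= in co cn.
have csK := sym_connect_sym (symK (inl x1) (inr x2) symR qK).
set K := Kr R q (inl x1) (inr x2) in co cn csK *.
have sub : forall x y, connect K x y -> connect (sumrel Rq1 Rq2) x y.
  move=> x y h; rewrite -old_eqv; move: x y h; apply: connect_sub => a b /orP[h|/andP[_ h]];
    by apply: connect1; rewrite h ?orbT.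
have cross : forall a b, connect K (inl a) (inr b) = false.
  by move=> a b; apply/negP => /sub; rewrite connect_suml.
have cross' : forall a b, connect K (inr b) (inl a) = false.
  by move=> a b; apply/negP => /sub; rewrite connect_sumr.
have Rp : forall x, R x (sum_map p1 p2 x) by move=> [a|a] /=.
have pK : forall x, sum_map p1 p2 (sum_map p1 p2 x) = x by move=> [a|a]; rewrite /= ?p1K ?p2K.
have pF : forall x, sum_map p1 p2 x != x.
  move=> [a|a] /=; rewrite ?(inj_eq (@inl_inj _ _)) ?(inj_eq (@inr_inj _ _)); by [].
have par := @parity _ R _ _ _ qK qF wu wqu _ pK pF Rp.
have cuq : connect K (inl x1) (inl (q1 x1)).
  have := par (inl x1); rewrite /= connect0 !cross.
  by case: (connect K _ _).
have cwq : connect K (inr x2) (inr (q2 x2)).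
  have := par (inr x2); rewrite /= connect0 !cross'.
  by case: (connect K _ _).
rewrite cuq cwq /= in co.
rewrite (csK (inl (q1 x1)) (inl x1)) cuq cwq !cross /= in cn.
by rewrite !addn0 in co cn; rewrite co; exact: cn.
Qed.

End JoinCount.


Section HJoin.
Variables (T1 T2 : finType) (a0 a1 a2 : T1 -> T1) (b0 b1 b2 : T2 -> T2) (x1 : T1) (x2 : T2).
Hypotheses (H1 : is_hypermap a0 a1 a2) (H2 : is_hypermap b0 b1 b2).

Local Notation S0 := (sum_map a0 b0).
Local Notation S2 := (sum_map a2 b2).
Local Notation J := (join1 a1 b1 x1 x2).

Lemma sum_map_eq (f : T1 -> T1) (g : T2 -> T2) x y :
  (y == sum_map f g x) = sumrel (fun a b => b == f a) (fun a b => b == g a) x y.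
Proof.
by case: x => a; case: y => b /=; rewrite ?(inj_eq (@inl_inj _ _)) ?(inj_eq (@inr_inj _ _)).
Qed.

Lemma join_sw z : J z = sw (sum_map a1 b1) (inl x1) (inr x2) z.
Proof. by []. Qed.

Lemma nverts_join : nverts J S2 + 1 = nverts a1 a2 + nverts b1 b2.
Proof.
case: H1 => a0K [a1K [a2K [a0F [a1F a2F]]]].
case: H2 => b0K [b1K [b2K [b0F [b1F b2F]]]].
have := @join_count _ _ (fun a b => b == a2 a) (fun a b => b == b2 a) a1 a2 b1 b2 x1 x2
  (fun x y => inv_eq a2K x y) (fun x y => inv_eq b2K x y) a1K a1F b1K b1F a2K a2F b2K b2F
  (fun x => eqxx _) (fun x => eqxx _).
have e1 : nverts J S2 = ncls (fun x y => sumrel (fun a b => b == a2 a) (fun a b => b == b2 a) x y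
   || (y == sw (sum_map a1 b1) (inl x1) (inr x2) x)).
  apply: eq_ncls; apply: eq_connect => x y; rewrite /rel2 -sum_map_eq join_sw orbC //.
have e2 : forall (T : finType) (f g : T -> T), nverts f g = ncls (fun a b => (b == g a) || (b == f a)).
  by move=> T f g; apply: eq_ncls; apply: eq_connect => x y; rewrite /rel2 orbC.
by rewrite e1 !e2.
Qed.


Lemma sum_map_eq2 (f f' : T1 -> T1) (g g' : T2 -> T2) x y :
  (y == sum_map f g x) || (y == sum_map f' g' x) =
  sumrel (fun a b => (b == f a) || (b == f' a)) (fun a b => (b == g a) || (b == g' a)) x y.
Proof.
by case: x => a; case: y => b /=; rewrite ?(inj_eq (@inl_inj _ _)) ?(inj_eq (@inr_inj _ _)).
Qed.

Lemma nfaces_join : nfaces S0 J + 1 = nfaces a0 a1 + nfaces b0 b1.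
Proof.
case: H1 => a0K [a1K [a2K [a0F [a1F a2F]]]].
case: H2 => b0K [b1K [b2K [b0F [b1F b2F]]]].
have := @join_count _ _ (fun a b => b == a0 a) (fun a b => b == b0 a) a1 a0 b1 b0 x1 x2
  (fun x y => inv_eq a0K x y) (fun x y => inv_eq b0K x y) a1K a1F b1K b1F a0K a0F b0K b0F
  (fun x => eqxx _) (fun x => eqxx _).
have e1 : nfaces S0 J = ncls (fun x y => sumrel (fun a b => b == a0 a) (fun a b => b == b0 a) x y
   || (y == sw (sum_map a1 b1) (inl x1) (inr x2) x)).
  apply: eq_ncls; apply: eq_connect => x y; rewrite /rel2 -sum_map_eq join_sw //.
by rewrite e1.
Qed.

Lemma ncomps_join : ncomps S0 J S2 + 1 = ncomps a0 a1 a2 + ncomps b0 b1 b2.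
Proof.
case: H1 => a0K [a1K [a2K [a0F [a1F a2F]]]].
case: H2 => b0K [b1K [b2K [b0F [b1F b2F]]]].
have sa : symmetric (fun a b => (b == a0 a) || (b == a2 a)).
  by move=> x y; rewrite (inv_eq a0K) (inv_eq a2K).
have sb : symmetric (fun a b => (b == b0 a) || (b == b2 a)).
  by move=> x y; rewrite (inv_eq b0K) (inv_eq b2K).
have := @join_count _ _ _ _ a1 a0 b1 b0 x1 x2 sa sb a1K a1F b1K b1F a0K a0F b0K b0F
  (fun x => introT orP (or_introl (eqxx _))) (fun x => introT orP (or_introl (eqxx _))).
have e1 : ncomps S0 J S2 = ncls (fun x y =>
   sumrel (fun a b => (b == a0 a) || (b == a2 a)) (fun a b => (b == b0 a) || (b == b2 a)) x y
   || (y == sw (sum_map a1 b1) (inl x1) (inr x2) x)).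
  apply: eq_ncls; apply: eq_connect => x y; rewrite /rel3 -sum_map_eq2 join_sw.
  by case: (y == S0 x); case: (y == S2 x); case: (y == _).
have e2 : forall (T : finType) (f g h : T -> T), ncomps f g h =
    ncls (fun a b => (b == f a) || (b == h a) || (b == g a)).
  move=> T f g h; apply: eq_ncls; apply: eq_connect => x y; rewrite /rel3.
  by case: (y == f x); case: (y == g x); case: (y == h x).
by rewrite e1 !e2.
Qed.

Lemma hedges_sum : hedges S0 S2 = @liftl T1 T2 @: hedges a0 a2 :|: @liftr T1 T2 @: hedges b0 b2.
Proof.
rewrite /hedges -classes_sum; apply: eq_classes; apply: eq_connect => x y.
by rewrite /rel2 sum_map_eq2.
Qed.

Lemma nhedges_sum : nhedges S0 S2 = nhedges a0 a2 + nhedges b0 b2.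
Proof.
rewrite /nhedges -ncls_sum; apply: eq_ncls; apply: eq_connect => x y.
by rewrite /rel2 sum_map_eq2.
Qed.

Lemma sum_deg_sum : sum_deg S0 S2 = sum_deg a0 a2 + sum_deg b0 b2.
Proof.
case: H1 => a0K [a1K [a2K [a0F [a1F a2F]]]].
case: H2 => b0K [b1K [b2K [b0F [b1F b2F]]]].
have S0K : forall x, S0 (S0 x) = x by case=> a /=; rewrite ?a0K ?b0K.
have S0F : forall x, S0 x != x.
  case=> a /=; rewrite ?(inj_eq (@inl_inj _ _)) ?(inj_eq (@inr_inj _ _)); by [].
have S2K : forall x, S2 (S2 x) = x by case=> a /=; rewrite ?a2K ?b2K.
have h := sum_deg_half S0K S0F S2K.
have h1 := sum_deg_half a0K a0F a2K.
have h2 := sum_deg_half b0K b0F b2K.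
rewrite card_sum in h; lia.
Qed.

Lemma genus_join : euler_genus S0 J S2 = (euler_genus a0 a1 a2 + euler_genus b0 b1 b2)%R.
Proof.
have hv := nverts_join; have hf := nfaces_join; have hc := ncomps_join.
have he := nhedges_sum; have hs := sum_deg_sum.
rewrite /euler_genus /euler_char /nhedges in he *.
lia.
Qed.

End HJoin.


Section PD.
Variable T : finType.

Lemma euler_genus_ext (s0 s1 s2 t0 t1 t2 : T -> T) :
  s0 =1 t0 -> s1 =1 t1 -> s2 =1 t2 -> euler_genus s0 s1 s2 = euler_genus t0 t1 t2.
Proof.
move=> e0 e1 e2.
have h : hedges s0 s2 = hedges t0 t2.
  by apply: eq_classes; apply: eq_connect => x y; rewrite /rel2 e0 e2.
rewrite /euler_genus /euler_char /sum_deg h /nverts /nhedges /nfaces /ncomps.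
rewrite (@eq_ncls _ (rel2 s1 s2) (rel2 t1 t2)); last first.
  by apply: eq_connect => x y; rewrite /rel2 e1 e2.
rewrite (@eq_ncls _ (rel2 s0 s2) (rel2 t0 t2)); last first.
  by apply: eq_connect => x y; rewrite /rel2 e0 e2.
rewrite (@eq_ncls _ (rel2 s0 s1) (rel2 t0 t1)); last first.
  by apply: eq_connect => x y; rewrite /rel2 e0 e1.
rewrite (@eq_ncls _ (rel3 s0 s1 s2) (rel3 t0 t1 t2)) //.
by apply: eq_connect => x y; rewrite /rel3 e0 e1 e2.
Qed.

Lemma genus_ge0 (s0 s1 s2 : T -> T) : is_hypermap s0 s1 s2 -> (0 <= euler_genus s0 s1 s2)%R.
Proof.
case=> s0K [s1K [s2K [s0F [s1F s2F]]]].
have := euler_ineq s0K s0F s2K s2F s1K s1F.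
rewrite /euler_genus /euler_char; lia.
Qed.

Lemma pd_hypermap (s0 s1 s2 : T -> T) (S : {set T}) : is_hypermap s0 s1 s2 ->
  (forall x, x \in S -> s0 x \in S) -> (forall x, x \in S -> s2 x \in S) ->
  is_hypermap (pd0 S s0 s2) s1 (pd2 S s0 s2).
Proof.
case=> s0K [s1K [s2K [s0F [s1F s2F]]]] c0 c2.
have m0 : forall x, (s0 x \in S) = (x \in S).
  move=> x; apply/idP/idP => [/c0|/c0 //]; by rewrite s0K.
have m2 : forall x, (s2 x \in S) = (x \in S).
  move=> x; apply/idP/idP => [/c2|/c2 //]; by rewrite s2K.
rewrite /pd0 /pd2; split; [|split; [done|split; [|split; [|split; [done|]]]]] => x;
  case xS: (x \in S).
- by rewrite m2 xS s2K.
- by rewrite m0 xS s0K.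
- by rewrite m0 xS s0K.
- by rewrite m2 xS s2K.
- exact: s2F.
- exact: s0F.
- exact: s0F.
- exact: s2F.
Qed.

Lemma hedges_closed (s0 s2 : T -> T) (A : {set {set T}}) :
  A \subset hedges s0 s2 ->
  (forall x, x \in \bigcup_(e in A) e -> s0 x \in \bigcup_(e in A) e) /\
  (forall x, x \in \bigcup_(e in A) e -> s2 x \in \bigcup_(e in A) e).
Proof.
move=> sub; split=> x /bigcupP [E EA xE]; apply/bigcupP; exists E => //;
  apply: (class_closed (subsetP sub _ EA) xE); by rewrite /rel2 eqxx ?orbT.
Qed.

End PD.


Section Lift.
Variables (T1 T2 : finType).
Local Notation liftl := (@liftl T1 T2).
Local Notation liftr := (@liftr T1 T2).

Lemma lr_neq (E : {set T1}) (F : {set T2}) : F != set0 -> liftl E != liftr F.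
Proof.
case/set0Pn => y yF; apply/eqP => e.
have : inr y \in liftr F by rewrite /liftr imset_f.
by rewrite -e => /imsetP [x _ []].
Qed.

Lemma rl_neq (E : {set T1}) (F : {set T2}) : E != set0 -> liftr F != liftl E.
Proof.
case/set0Pn => y yE; apply/eqP => e.
have : inl y \in liftl E by rewrite /liftl imset_f.
by rewrite -e => /imsetP [x _ []].
Qed.

Definition phi (p : {set {set T1}} * {set {set T2}}) : {set {set T1 + T2}} :=
  liftl @: p.1 :|: liftr @: p.2.

Lemma liftl_inj : injective liftl. Proof. exact: imset_inj (@inl_inj _ _). Qed.
Lemma liftr_inj : injective liftr. Proof. exact: imset_inj (@inr_inj _ _). Qed.

Lemma mem_phil (A1 : {set {set T1}}) (A2 : {set {set T2}}) E : (forall F, F \in A2 -> F != set0) ->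
  (liftl E \in phi (A1, A2)) = (E \in A1).
Proof.
move=> ne; rewrite /phi inE (mem_imset _ _ liftl_inj) /=.
case: (E \in A1) => //=; apply/negP => /imsetP [F FA2 e].
by move: (lr_neq E (ne F FA2)); rewrite e eqxx.
Qed.

Lemma mem_phir (A1 : {set {set T1}}) (A2 : {set {set T2}}) F : (forall E, E \in A1 -> E != set0) ->
  (liftr F \in phi (A1, A2)) = (F \in A2).
Proof.
move=> ne; rewrite /phi inE (mem_imset _ _ liftr_inj) /= orbC.
case: (F \in A2) => //=; apply/negP => /imsetP [E EA1 e].
by move: (rl_neq F (ne E EA1)); rewrite e eqxx.
Qed.

Lemma powerset_phi (H1 : {set {set T1}}) (H2 : {set {set T2}}) :
  (forall E, E \in H1 -> E != set0) -> (forall F, F \in H2 -> F != set0) ->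
  powerset (liftl @: H1 :|: liftr @: H2) = phi @: setX (powerset H1) (powerset H2).
Proof.
move=> ne1 ne2; apply/setP => X; rewrite inE; apply/idP/imsetP.
  move=> sub; exists (liftl @^-1: X, liftr @^-1: X).
    rewrite inE /= !inE; apply/andP; split; apply/subsetP => E; rewrite inE => EX.
      have := subsetP sub _ EX; rewrite -/(phi (H1, H2)) mem_phil //.
    have := subsetP sub _ EX; rewrite -/(phi (H1, H2)) mem_phir //.
  apply/setP => Y; rewrite /phi inE; apply/idP/orP.
    move=> YX; have := subsetP sub _ YX; rewrite inE => /orP [] /imsetP [E _ eY].
      by left; rewrite eY imset_f // inE -eY.
    by right; rewrite eY imset_f // inE -eY.
  by case=> /imsetP [E]; rewrite inE => EX ->.
move=> [[A1 A2]]; rewrite inE /= !inE => /andP [s1 s2] ->.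
by rewrite /phi setUSS // imsetS.
Qed.

Lemma phi_inj (H1 : {set {set T1}}) (H2 : {set {set T2}}) :
  (forall E, E \in H1 -> E != set0) -> (forall F, F \in H2 -> F != set0) ->
  {in setX (powerset H1) (powerset H2) &, injective phi}.
Proof.
move=> ne1 ne2 [A1 A2] [B1 B2]; rewrite !inE /= => /andP [a1 a2] /andP [b1 b2] e.
have nA1 : forall E, E \in A1 -> E != set0 by move=> E /(subsetP a1); exact: ne1.
have nA2 : forall F, F \in A2 -> F != set0 by move=> F /(subsetP a2); exact: ne2.
have nB1 : forall E, E \in B1 -> E != set0 by move=> E /(subsetP b1); exact: ne1.
have nB2 : forall F, F \in B2 -> F != set0 by move=> F /(subsetP b2); exact: ne2.
congr (_, _); apply/setP => E.
  by rewrite -(@mem_phil A1 A2 E nA2) e (@mem_phil B1 B2 E nB2).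
by rewrite -(@mem_phir A1 A2 E nA1) e (@mem_phir B1 B2 E nB1).
Qed.

Lemma bigcup_phil (A1 : {set {set T1}}) (A2 : {set {set T2}}) x :
  (inl x \in \bigcup_(e in phi (A1, A2)) e) = (x \in \bigcup_(e in A1) e).
Proof.
apply/bigcupP/bigcupP => [[e] | [E EA xE]].
  rewrite /phi inE => /orP [] /imsetP [E EA ->].
    by rewrite /liftl (mem_imset _ _ (@inl_inj _ _)) => xE; exists E.
  by move/imsetP => [y _ []].
exists (liftl E); first by rewrite /phi inE imset_f.
by rewrite /liftl (mem_imset _ _ (@inl_inj _ _)).
Qed.

Lemma bigcup_phir (A1 : {set {set T1}}) (A2 : {set {set T2}}) x :
  (inr x \in \bigcup_(e in phi (A1, A2)) e) = (x \in \bigcup_(e in A2) e).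
Proof.
apply/bigcupP/bigcupP => [[e] | [E EA xE]].
  rewrite /phi inE => /orP [] /imsetP [E EA ->].
    by move/imsetP => [y _ []].
  by rewrite /liftr (mem_imset _ _ (@inr_inj _ _)) => xE; exists E.
exists (liftr E); first by rewrite /phi inE imset_f ?orbT.
by rewrite /liftr (mem_imset _ _ (@inr_inj _ _)).
Qed.

End Lift.


Section Final.
Variables (T1 T2 : finType) (a0 a1 a2 : T1 -> T1) (b0 b1 b2 : T2 -> T2) (x1 : T1) (x2 : T2).
Hypotheses (H1 : is_hypermap a0 a1 a2) (H2 : is_hypermap b0 b1 b2).

Local Notation S0 := (sum_map a0 b0).
Local Notation S2 := (sum_map a2 b2).
Local Notation J := (join1 a1 b1 x1 x2).

Lemma pdual_join (A1 : {set {set T1}}) (A2 : {set {set T2}}) :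
  A1 \subset hedges a0 a2 -> A2 \subset hedges b0 b2 ->
  pdual_genus S0 J S2 (phi (A1, A2)) =
  (pdual_genus a0 a1 a2 A1 + pdual_genus b0 b1 b2 A2)%R.
Proof.
move=> s1 s2; rewrite /pdual_genus /=.
have [c10 c12] := hedges_closed s1; have [c20 c22] := hedges_closed s2.
rewrite (@euler_genus_ext _ _ J _
   (sum_map (pd0 (\bigcup_(e in A1) e) a0 a2) (pd0 (\bigcup_(e in A2) e) b0 b2)) J
   (sum_map (pd2 (\bigcup_(e in A1) e) a0 a2) (pd2 (\bigcup_(e in A2) e) b0 b2))).
- by apply: genus_join; apply: pd_hypermap.
- by move=> [x|x]; rewrite /pd0 /= ?bigcup_phil ?bigcup_phir; case: ifP.
- by [].
- by move=> [x|x]; rewrite /pd2 /= ?bigcup_phil ?bigcup_phir; case: ifP.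
Qed.

End Final.

Lemma pd_ge0 (T : finType) (s0 s1 s2 : T -> T) (A : {set {set T}}) : is_hypermap s0 s1 s2 ->
  A \subset hedges s0 s2 -> (0 <= pdual_genus s0 s1 s2 A)%R.
Proof.
move=> H sA; have [c0 c2] := hedges_closed sA.
by apply: genus_ge0; apply: pd_hypermap.
Qed.

Unset Implicit Arguments.

Theorem mainTheorem5 (T1 T2 : finType)
  (f0 f1 f2 : T1 -> T1) (g0 g1 g2 : T2 -> T2) (x1 : T1) (x2 : T2) :
  is_hypermap f0 f1 f2 -> is_hypermap g0 g1 g2 ->
  connected_hm f0 f1 f2 -> connected_hm g0 g1 g2 ->
  pd_poly (sum_map f0 g0) (join1 f1 g1 x1 x2) (sum_map f2 g2)
  = (pd_poly f0 f1 f2 * pd_poly g0 g1 g2)%R.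
Proof.
move=> H1 H2 _ _.
have ne1 : forall E, E \in hedges f0 f2 -> E != set0 := fun E => @class_nonempty _ _ E.
have ne2 : forall E, E \in hedges g0 g2 -> E != set0 := fun E => @class_nonempty _ _ E.
rewrite /pd_poly hedges_sum (powerset_phi ne1 ne2) (big_imset _ (phi_inj ne1 ne2)) /=.
apply/esym; rewrite GRing.mulr_suml.
rewrite (eq_bigr (fun i => \sum_(j in powerset (hedges g0 g2))
   ('X^`|pdual_genus f0 f1 f2 i| * 'X^`|pdual_genus g0 g1 g2 j|))%R); last first.
  by move=> i _; rewrite GRing.mulr_sumr.
rewrite (pair_big (fun i => i \in powerset (hedges f0 f2)) (fun j => j \in powerset (hedges g0 g2))) /=; apply/esym.
apply: eq_big => [[A B]|[A B]]; first by rewrite !inE.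
rewrite !inE /= => /andP [sA sB].
rewrite pdual_join // -GRing.exprD; congr (_ ^+ _)%R.
move: (pd_ge0 H1 sA) (pd_ge0 H2 sB).
by move: (pdual_genus f0 f1 f2 A) (pdual_genus g0 g1 g2 B) => [m|m] [n|n].
Qed.
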